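(* Let $M\ge4$ and let $g_n=e^{j2\pi\phi_n}$, $n=-2M,\dots,2M$, with $\phi_n\sim\mathcal{U}[0,1]$ i.i.d. Let $K_g(\tau)=\frac1M\sum_{n=-2M}^{2M}s_ng_ne^{j2\pi n\tau}$. There exist numerical constants $C_1,C_2,C_3$ such that, with probability at least $1-C_3(M^3\log M)^{-1/2}$, $$|K_g(\tau)|\le C_1\sqrt{\frac{\log M}{M}}\quad\text{and}\quad|K_g'(\tau)|\le C_2\sqrt{M\log M}\qquad\text{for all }\tau\in[0,1).$$
   Context: $j=\sqrt{-1}$. For $|n|\le2M$, $s_n=\frac1M\sum_{i=\max\{n-M,-M\}}^{\min\{n+M,M\}}(1-|i/M|)(1-|n/M-i/M|)$ (coefficients of the squared Fejér kernel; $|s_n|\le1$). $K_g'$ is the derivative in $\tau$. *)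

(* Defs.v *)
From HB Require Import structures.
From mathcomp Require Import all_boot all_order all_algebra.
From mathcomp Require Import all_classical all_reals all_analysis.
Unset Printing Implicit Defensive.
Import Order.TTheory GRing.Theory Num.Theory.
Import numFieldNormedType.Exports.
Local Open Scope classical_set_scope.
Local Open Scope ring_scope.

(* Index k : 'I_(4M+1) encodes n = k - 2M, n = -2M..2M. *)
Definition idx (M k : nat) : int := k%:Z - (2 * M)%:Z.

(* s_n = (1/M) sum_{i = max(n-M,-M)}^{min(n+M,M)} (1-|i/M|)(1-|n/M - i/M|).
   i ranges over -M..M (i = j - M, j < 2M+1) restricted to |n - i| <= M. *)
Definition fejer_s {R : realType} (M : nat) (n : int) : R :=
  M%:R^-1 * \sum_(j < (2 * M).+1 | `|n - (j%:Z - M%:Z)| <= M%:Z)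
     ((1 - `|(j%:Z - M%:Z)%:~R / M%:R|) *
      (1 - `|n%:~R / M%:R - (j%:Z - M%:Z)%:~R / M%:R|)).

(* Real and imaginary parts of
   K_g(tau) = (1/M) sum_n s_n e^{j 2 pi phi_n} e^{j 2 pi n tau}. *)
Definition K_re {R : realType} (M : nat) (phi : 'I_(4 * M).+1 -> R) (tau : R) : R :=
  M%:R^-1 * \sum_(k < (4 * M).+1)
     fejer_s M (idx M k) * cos (2 * pi * (phi k + (idx M k)%:~R * tau)).

Definition K_im {R : realType} (M : nat) (phi : 'I_(4 * M).+1 -> R) (tau : R) : R :=
  M%:R^-1 * \sum_(k < (4 * M).+1)
     fejer_s M (idx M k) * sin (2 * pi * (phi k + (idx M k)%:~R * tau)).

Definition K_abs {R : realType} (M : nat) (phi : 'I_(4 * M).+1 -> R) (tau : R) : R :=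
  Num.sqrt (K_re M phi tau ^+ 2 + K_im M phi tau ^+ 2).

Definition Kder_abs {R : realType} (M : nat) (phi : 'I_(4 * M).+1 -> R) (tau : R) : R :=
  Num.sqrt ((derive1 (K_re M phi) tau) ^+ 2 + (derive1 (K_im M phi) tau) ^+ 2).

Definition uniform01 {R : realType} {d : measure_display} {T : measurableType d}
  (P : probability T R) (X : T -> R) : Prop :=
  measurable_fun setT X /\
  forall A : set R, measurable A ->
    P (X @^-1` A) = (@lebesgue_measure R) (A `&` `[0%R, 1%R]).

Definition mutually_independent {R : realType} {d : measure_display}
  {T : measurableType d} {I : finType} (P : probability T R) (X : I -> T -> R) : Prop :=
  forall (S : {set I}) (A : I -> set R), (forall i, measurable (A i)) ->
    P (\bigcap_(i in [set i | i \in S]) (X i @^-1` A i)) =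
    (\prod_(i in S) P (X i @^-1` A i))%E.

(* Main.v *)
Require Import Defs.
From HB Require Import structures.
From mathcomp Require Import all_boot all_order all_algebra.
From mathcomp Require Import all_classical all_reals all_analysis.
From mathcomp Require Import ring lra.
From mathcomp Require Import zify.
Import Order.TTheory GRing.Theory Num.Theory.
Import numFieldNormedType.Exports.
Local Open Scope classical_set_scope.
Local Open Scope ring_scope.

Module Lib.


Section S.
Variable R : realType.


Lemma cos_lip (x y : R) : `|cos x - cos y| <= `|x - y|.
Proof.
wlog yx : x y / y <= x.
  move=> H; case: (leP y x) => [/H//|/ltW/H]; by rewrite distrC [`|y - x|]distrC.
have [c _ ->] := @MVT_segment R cos (fun t => - sin t) y x yx
  (fun t _ => is_derive_cos t) (continuous_subspaceT (@continuous_cos R)).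
rewrite normrM ler_piMl //; by rewrite normrN sin_max.
Qed.

Lemma sin_lip (x y : R) : `|sin x - sin y| <= `|x - y|.
Proof.
wlog yx : x y / y <= x.
  move=> H; case: (leP y x) => [/H//|/ltW/H]; by rewrite distrC [`|y - x|]distrC.
have [c _ ->] := @MVT_segment R sin cos y x yx
  (fun t _ => is_derive_sin t) (continuous_subspaceT (@continuous_sin R)).
rewrite normrM ler_piMl //; by rewrite cos_max.
Qed.



Lemma sum_cos_roots (L : nat) (th : R) : (2 <= L)%N ->
  \sum_(i < L) cos (2 * pi * (i%:R / L%:R) + th) = 0.
Proof.
move=> L2.
have L0 : (0 : R) < L%:R by rewrite ltr0n; case: L L2.
have L2' : (2 : R) <= L%:R by rewrite (ler_nat R 2 L).
pose h : R := pi / L%:R.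
have hpos : 0 < h by rewrite divr_gt0 // pi_gt0.
have hlt : h < pi.
  rewrite /h ltr_pdivrMr // ; have := pi_gt0 R; nra.
have s0 : 0 < sin h by apply: sin_gt0_pi; rewrite hpos hlt.
pose g (i : nat) := sin (th + (i%:R * 2 - 1) * h).
have key : forall i : nat, 2 * sin h * cos (2 * pi * (i%:R / L%:R) + th) = g i.+1 - g i.
  move=> i; rewrite /g.
  have -> : th + (i.+1%:R * 2 - 1) * h = (2 * pi * (i%:R / L%:R) + th) + h.
    rewrite /h -natr1; field; lra.
  have -> : th + (i%:R * 2 - 1) * h = (2 * pi * (i%:R / L%:R) + th) - h.
    rewrite /h; field; lra.
  rewrite sinD sinB; ring.
have : 2 * sin h * (\sum_(i < L) cos (2 * pi * (i%:R / L%:R) + th)) = 0.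
  rewrite mulr_sumr (eq_bigr (fun i : 'I_L => g i.+1 - g i)); last by move=> i _; apply: key.
  rewrite -(big_mkord xpredT (fun i => g i.+1 - g i)) telescope_sumr // /g.
  have -> : th + (L%:R * 2 - 1) * h = (th + (0%:R * 2 - 1) * h) + pi *+ 2.
    rewrite /h mulr2n; field; lra.
  by rewrite sinD2pi subrr.
move/eqP; rewrite mulf_eq0 => /orP [|/eqP //].
rewrite mulf_eq0 => /orP [|]; first by rewrite pnatr_eq0.
by rewrite gt_eqF.
Qed.

Lemma expR_le2 (x : R) : x <= 2^-1 -> expR x <= 1 + x + 2 * x ^+ 2.
Proof.
move=> hx.
have h1 : 0 < 1 - x by lra.
have e1 : 1 - x <= expR (- x) by have := expR_ge1Dx (- x); lra.
have e2 : expR x * (1 - x) <= 1.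
  rewrite -[X in _ <= X](expRxMexpNx_1 x); apply: ler_wpM2l e1; exact: expR_ge0.
have e3 : 1 <= (1 + x + 2 * x ^+ 2) * (1 - x) by nra.
nra.
Qed.

Lemma chernoff_count (I : finType) (L : nat) (a th : I -> R) (c lam t : R) :
  (2 <= L)%N -> (forall k, `|a k| <= c) -> 0 <= lam -> lam * c <= 2^-1 ->
  \sum_(v : {ffun I -> 'I_L})
     (((t <= \sum_k a k * cos (2 * pi * ((v k)%:R / L%:R) + th k))%R : bool)%:R : R)
  <= L%:R ^+ #|I| * expR (- (lam * t) + #|I|%:R * (2 * lam ^+ 2 * c ^+ 2)).
Proof.
move=> L2 ha l0 lc.
pose F k (i : 'I_L) := expR (lam * (a k * cos (2 * pi * (i%:R / L%:R) + th k))).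
apply: (@le_trans _ _ (\sum_(v : {ffun I -> 'I_L}) expR (- (lam * t)) * \prod_k F k (v k))).
  apply: ler_sum => v _.
  rewrite /F -expR_sum -expRD.
  set S := \sum_k _.
  have -> : \sum_(i in I) lam * (a i * cos (2 * pi * ((v i)%:R / L%:R) + th i)) = lam * S.
    by rewrite /S mulr_sumr.
  case: (boolP (t <= S)) => h /=.
    rewrite -expR0 ler_expR; nra.
  by rewrite expR_ge0.
rewrite -mulr_sumr -bigA_distr_bigA /= expRD mulrCA.
apply: ler_wpM2l; first exact: expR_ge0.
have hk : forall k, 0 <= \sum_(i < L) F k i <= L%:R * expR (2 * lam ^+ 2 * c ^+ 2).
  move=> k; apply/andP; split; first by apply: sumr_ge0 => i _; exact: expR_ge0.
  apply: (@le_trans _ _ (\sum_(i < L) (1 + lam * a k * cos (2 * pi * (i%:R / L%:R) + th k)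
        + 2 * (lam ^+ 2 * c ^+ 2)))).
    apply: ler_sum => i _; rewrite /F.
    set y := lam * (a k * cos _).
    have hy : `|y| <= lam * c.
      rewrite /y normrM ger0_norm // ler_wpM2l // normrM.
      apply: le_trans (ler_wpM2l (normr_ge0 _) (cos_max _)) _; rewrite mulr1; exact: ha.
    have hy2 : y <= 2^-1 by have := ler_norm y; lra.
    apply: (le_trans (expR_le2 _ hy2)).
    apply: lerD; first by rewrite /y mulrA.
    have h1 := ler_norm y; have h2 := ler_norm (- y); rewrite normrN in h2.
    nra.
  rewrite !big_split /= -mulr_sumr sum_cos_roots // mulr0 addr0.
  rewrite !sumr_const card_ord -mulrnDl -[_ *+ L]mulr_natl.
  apply: ler_wpM2l; first exact: ler0n.
  rewrite mulrA; exact: expR_ge1Dx.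
apply: le_trans; first by apply: ler_prod => k _; exact: hk.
by rewrite prodr_const exprMn -expRM_natl.
Qed.


Lemma is_derive_lin (x b c : R) : is_derive x 1 (fun t => b + c * t) c.
Proof. apply: is_derive_eq; rewrite add0r mul1r; exact: mulr1. Qed.

Lemma is_derive_cosaff (x a b c : R) :
  is_derive x 1 (fun t => a * cos (b + c * t)) (a * (- sin (b + c * x) * c)).
Proof.
have h : is_derive x 1 (cos \o (fun t => b + c * t)) (- sin (b + c * x) * c).
  apply: is_derive1_comp; last exact: is_derive_lin.
have := is_deriveZ a h.
exact.
Qed.

Lemma is_derive_cossum n (x : R) (a b c : 'I_n -> R) :
  is_derive x 1 (fun t => \sum_(k < n) a k * cos (b k + c k * t))
    (\sum_(k < n) a k * (- sin (b k + c k * x) * c k)).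
Proof.
have -> : (fun t => \sum_(k < n) a k * cos (b k + c k * t)) =
   \sum_(k < n) (fun t => a k * cos (b k + c k * t)).
  by apply: funext => t; rewrite fct_sumE.
apply: is_derive_sum => k; exact: is_derive_cosaff.
Qed.


Definition cell (L : nat) (i : nat) : set R := `[i%:R / L%:R, i.+1%:R / L%:R[.

Lemma cell_disj (L : nat) (i j : nat) (x : R) : (0 < L)%N ->
  cell L i x -> cell L j x -> i = j.
Proof.
move=> L0; rewrite /cell /= !in_itv /= => /andP [h1 h2] /andP [h3 h4].
have L0' : (0 : R) < L%:R by rewrite ltr0n.
have a : (i%:R : R) / L%:R < j.+1%:R / L%:R by apply: le_lt_trans h1 h4.
have b : (j%:R : R) / L%:R < i.+1%:R / L%:R by apply: le_lt_trans h3 h2.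
have iL : (0 : R) < L%:R^-1 by rewrite invr_gt0.
move: a b; rewrite !(ltr_pM2r iL) !ltr_nat !ltnS => a b.
by apply/eqP; rewrite eqn_leq a b.
Qed.

Lemma cell_meas L i : measurable (cell L i).
Proof. exact: measurable_itv. Qed.

Lemma leb_cell L (i : 'I_L) :
  (@lebesgue_measure R) (cell L i `&` `[0%R, 1%R]) = (L%:R^-1)%:E.
Proof.
have L0 : (0 < L)%N by case: i => i /=; case: L => //.
have L0' : (0 : R) < L%:R by rewrite ltr0n.
have sub : cell L i `<=` `[0%R, 1%R].
  move=> x; rewrite /cell /= !in_itv /= => /andP [h1 h2]; apply/andP; split.
    by apply: le_trans h1; rewrite divr_ge0.
  apply: (le_trans (ltW h2)); rewrite ler_pdivrMr // mul1r ler_nat; exact: ltn_ord.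
rewrite setIidl // /cell lebesgue_measure_itv /= lte_fin ltr_pM2r ?invr_gt0 // ltr_nat ltnSn.
by rewrite -EFinB -mulrBl -natrB // subSnn mul1r.
Qed.

Section P.
Context (d : measure_display) (T : measurableType d) (P : probability T R)
  (I : finType) (X : I -> T -> R) (L : nat).
Hypotheses (L0 : (0 < L)%N) (hU : forall k, uniform01 P (X k))
  (hI : mutually_independent P X).

Definition Ev (v : {ffun I -> 'I_L}) : set T :=
  \bigcap_(i in [set i | i \in [set: I]%SET]) (X i @^-1` cell L (v i)).

Lemma Ev_meas v : measurable (Ev v).
Proof.
apply: fin_bigcap_measurable; first exact: finite_finset.
move=> i _; have := (hU i).1; move/(_ measurableT (cell L (v i)) (cell_meas _ _)).
by rewrite setTI.
Qed.

Lemma P_Ev v : P (Ev v) = ((L%:R^-1) ^+ #|I|)%:E.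
Proof.
rewrite /Ev (hI [set: I]%SET (fun i => cell L (v i))); last by move=> i; exact: cell_meas.
rewrite (eq_bigr (fun _ => (L%:R^-1)%:E)); last first.
  by move=> i _; rewrite (hU i).2 ?leb_cell //; exact: cell_meas.
by rewrite prodEFin prodr_const cardsT.
Qed.

Lemma P_union (good : pred {ffun I -> 'I_L}) :
  P (\bigcup_(v in [set v | good v]) Ev v) =
  ((\sum_v (good v)%:R) * (L%:R^-1) ^+ #|I|)%:E.
Proof.
rewrite measure_fin_bigcup; last first.
- by move=> v _; exact: Ev_meas.
- move=> v v' _ _ [x [h1 h2]]; apply/ffunP => k; apply: val_inj.
  apply: (@cell_disj L _ _ (X k x)) => //.
    by apply: h1; rewrite /= inE. 
  by apply: h2; rewrite /= inE.
- exact: finite_finset.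
rewrite (fsbigE [seq v <- enum {ffun I -> 'I_L} | good v]) /=.
- rewrite big_filter_cond.
  rewrite (eq_bigr (fun _ => ((L%:R^-1) ^+ #|I|)%:E)); last by move=> v _; exact: P_Ev.
  rewrite sumEFin big_mkcond big_enum /= mulr_suml; congr EFin; apply: eq_bigr => v _.
  case: ifPn => [/andP [-> _]|]; first by rewrite mul1r.
  move=> h; case gv : (good v); last by rewrite mul0r.
  exfalso; move/negP: h; apply; rewrite gv /=; exact: mem_set.
- by apply: filter_uniq; exact: enum_uniq.
- by move=> v /=; rewrite mem_filter => /andP [].
- by move=> v /= gv; rewrite mem_filter gv mem_enum.
Qed.
End P.
End S.

End Lib.
Import Lib.

Module E.


Section Main.
Variable R : realType.
Variable M : nat.

Definition nk (k : 'I_(4 * M).+1) : R := (idx M k)%:~R.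
Definition wK (k : 'I_(4 * M).+1) : R := M%:R^-1 * fejer_s M (idx M k).
Definition wD k : R := wK k * (2 * pi * nk k).
Definition G (a : 'I_(4 * M).+1 -> R) (sh : R) (x : 'I_(4 * M).+1 -> R) (tau : R) : R :=
  \sum_k a k * cos (2 * pi * x k + (2 * pi * (nk k * tau) + sh)).

Lemma K_reE phi tau : K_re M phi tau = G wK 0 phi tau.
Proof.
rewrite /K_re /G mulr_sumr; apply: eq_bigr => k _.
by rewrite addr0 /wK /nk mulrDr -[RHS]mulrA.
Qed.

Lemma K_imE phi tau : K_im M phi tau = G wK (-(pi/2)) phi tau.
Proof.
rewrite /K_im /G mulr_sumr; apply: eq_bigr => k _.
by rewrite /wK /nk addrA cosBpihalf mulrDr -[RHS]mulrA.
Qed.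

Lemma dK_reE phi tau : derive1 (K_re M phi) tau = G wD (pi/2) phi tau.
Proof.
have -> : K_re M phi = (fun t => \sum_k wK k * cos (2 * pi * phi k + (2 * pi * nk k) * t)).
  apply: funext => t; rewrite K_reE /G; apply: eq_bigr => k _.
  by rewrite addr0 mulrA.
rewrite derive1E (@derive_val _ _ _ _ _ _ _ (is_derive_cossum _ _ _ _ _ _)) /G.
apply: eq_bigr => k _; rewrite /wD addrA cosDpihalf [2 * pi * (nk k * tau)]mulrA; ring.
Qed.

Lemma dK_imE phi tau : derive1 (K_im M phi) tau = G wD 0 phi tau.
Proof.
have -> : K_im M phi = (fun t => \sum_k wK k * cos ((2 * pi * phi k - pi / 2) + (2 * pi * nk k) * t)).
  apply: funext => t; rewrite K_imE /G; apply: eq_bigr => k _.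
  congr (_ * cos _); ring.
rewrite derive1E (@derive_val _ _ _ _ _ _ _ (is_derive_cossum _ _ _ _ _ _)) /G.
apply: eq_bigr => k _; rewrite /wD addr0.
have -> : 2 * pi * phi k - pi / 2 + 2 * pi * nk k * tau = (2 * pi * phi k + 2 * pi * (nk k * tau)) - pi / 2.
  ring.
rewrite sinBpihalf opprK; ring.
Qed.

Lemma pi_le4 : (pi : R) <= 4.
Proof. have := @pihalf_lt2 R; lra. Qed.

Lemma intR_div_le1 (z : int) : (0 < M)%N -> `|z| <= M%:Z -> `|(z%:~R : R) / M%:R| <= 1.
Proof.
move=> M0 hz; have M0' : (0 : R) < M%:R by rewrite ltr0n.
rewrite normrM normfV normr_nat ler_pdivrMr // mul1r -intr_norm.
by rewrite -[M%:R]/((M%:Z)%:~R) ler_int.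
Qed.

Lemma fejer_le3 (z : int) : (0 < M)%N -> `|fejer_s M z : R| <= 3.
Proof.
move=> M0; have M0' : (0 : R) < M%:R by rewrite ltr0n.
rewrite /fejer_s normrM ger0_norm ?invr_ge0 ?ler0n //.
have hs : `|\sum_(j < (2 * M).+1 | `|z - (j%:Z - M%:Z)| <= M%:Z)
     ((1 - `|(j%:Z - M%:Z)%:~R / M%:R|) *
      (1 - `|z%:~R / M%:R - (j%:Z - M%:Z)%:~R / M%:R|)) : R| <= (2 * M).+1%:R.
  apply: (le_trans (ler_norm_sum _ _ _)).
  apply: (@le_trans _ _ (\sum_(j < (2 * M).+1) (1 : R))); last by rewrite sumr_const card_ord.
  rewrite [X in _ <= X](bigID (fun j : 'I_(2 * M).+1 => `|z - (j%:Z - M%:Z)| <= M%:Z)) /=.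
  rewrite -[X in X <= _]addr0; apply: lerD; last by apply: sumr_ge0.
  apply: ler_sum => j hj.
  have h1 : `|((j%:Z - M%:Z)%:~R : R) / M%:R| <= 1.
    apply: intR_div_le1 => //; have := ltn_ord j; lia.
  have h2 : `|(z%:~R : R) / M%:R - (j%:Z - M%:Z)%:~R / M%:R| <= 1.
    rewrite -mulrBl -intrB; exact: intR_div_le1.
  have := normr_ge0 (((j%:Z - M%:Z)%:~R : R) / M%:R).
  have := normr_ge0 ((z%:~R : R) / M%:R - (j%:Z - M%:Z)%:~R / M%:R).
  move: h1 h2; set p := `|_|; set q := `|_|.
  move=> h1 h2 h3 h4; rewrite normrM ger0_norm ?subr_ge0 // ger0_norm ?subr_ge0 //.
  nra.
apply: (le_trans (ler_wpM2l _ hs)); first by rewrite invr_ge0 ler0n.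
rewrite ler_pdivrMl // -natrM ler_nat; lia.
Qed.

Lemma nk_le k : `|nk k| <= 2 * M%:R.
Proof.
rewrite /nk -intr_norm -natrM -[(2 * M)%:R]/(((2 * M)%:Z)%:~R) ler_int /idx.
have := ltn_ord k; lia.
Qed.

Lemma wK_le k : (0 < M)%N -> `|wK k| <= 3 / M%:R.
Proof.
move=> M0; have M0' : (0 : R) < M%:R by rewrite ltr0n.
rewrite /wK normrM ger0_norm ?invr_ge0 ?ler0n // mulrC ler_pM2r ?invr_gt0 //.
exact: fejer_le3.
Qed.

Lemma wD_le k : (0 < M)%N -> `|wD k| <= 48.
Proof.
move=> M0; have M0' : (0 : R) < M%:R by rewrite ltr0n.
rewrite /wD normrM.
have h1 := wK_le k M0; have h2 := nk_le k.
have h3 : `|2 * pi * nk k| <= 8 * (2 * M%:R).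
  rewrite normrM ger0_norm; last by rewrite mulr_ge0 // pi_ge0.
  apply: ler_pM => //; first by rewrite mulr_ge0 // pi_ge0.
  have := pi_le4; lra.
apply: (le_trans (ler_pM _ _ h1 h3)) => //.
have -> : 3 / M%:R * (8 * (2 * M%:R)) = 48 :> R.
  by field; rewrite gt_eqF.
by [].
Qed.

Lemma G_lip a sh x x' tau tau' c dx dt :
  (forall k, `|a k| <= c) -> (forall k, `|x k - x' k| <= dx) -> `|tau - tau'| <= dt ->
  `|G a sh x tau - G a sh x' tau'| <= (4 * M).+1%:R * (c * (8 * dx + 16 * M%:R * dt)).
Proof.
move=> ha hx ht.
have c0 : 0 <= c by apply: le_trans (ha ord0).
have dx0 : 0 <= dx by apply: le_trans (hx ord0).
have dt0 : 0 <= dt by apply: le_trans ht.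
rewrite /G -sumrB.
apply: (le_trans (ler_norm_sum _ _ _)).
have -> : (4 * M).+1%:R * (c * (8 * dx + 16 * M%:R * dt)) =
  \sum_(k < (4 * M).+1) (c * (8 * dx + 16 * M%:R * dt)).
  by rewrite sumr_const card_ord mulr_natl.
apply: ler_sum => k _; rewrite -mulrBr normrM.
apply: ler_pM => //.
apply: (le_trans (cos_lip _ _ _)).
have -> : 2 * pi * x k + (2 * pi * (nk k * tau) + sh) - (2 * pi * x' k + (2 * pi * (nk k * tau') + sh))
   = 2 * pi * (x k - x' k) + 2 * pi * nk k * (tau - tau') by ring.
apply: (le_trans (ler_normD _ _)).
rewrite [`|2 * pi * (_ - _)|]normrM [`|2 * pi * nk k * _|]normrM [`|2 * pi * nk k|]normrM.
have p0 : 0 <= 2 * pi :> R by rewrite mulr_ge0 // pi_ge0.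
have p8 : `|2 * pi| <= 8 :> R by rewrite ger0_norm //; have := pi_le4; lra.
have h1 : `|2 * pi| * `|x k - x' k| <= 8 * dx by apply: ler_pM.
have h2 : `|2 * pi| * `|nk k| * `|tau - tau'| <= 8 * (2 * M%:R) * dt.
  apply: ler_pM; [exact: mulr_ge0 (normr_ge0 _) (normr_ge0 _) | exact: normr_ge0 | | exact: ht].
  apply: ler_pM => //; exact: nk_le.
lra.
Qed.

Definition ell : R := ln M%:R.
Definition u : R := Num.sqrt (ell / M%:R).

Lemma ell_facts : (4 <= M)%N -> 3 / 4 <= ell /\ ell <= M%:R.
Proof.
move=> hM; have M4 : (4 : R) <= M%:R by rewrite (ler_nat R 4 M).
have M0 : (0 : R) < M%:R by lra.
split; last by apply/ltW/ln_sublinear.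
have hi : M%:R^-1 <= 4^-1 :> R by rewrite lef_pV2 ?posrE //; lra.
have hi0 : 0 < M%:R^-1 :> R by rewrite invr_gt0.
have := @le_ln1Dx R (M%:R^-1 - 1); rewrite [1 + _]addrC subrK lnV ?posrE // => h.
have := h ltac:(lra); rewrite /ell; lra.
Qed.

Lemma u_facts : (4 <= M)%N ->
  [/\ 0 <= u, u ^+ 2 = ell / M%:R, u <= 1, M%:R^-1 <= u & 1 <= M%:R * u].
Proof.
move=> hM; have M4 : (4 : R) <= M%:R by rewrite (ler_nat R 4 M).
have M0 : (0 : R) < M%:R by lra.
have [e1 e2] := ell_facts hM.
have q0 : 0 <= ell / M%:R by rewrite divr_ge0 //; lra.
have u0 : 0 <= u by exact: sqrtr_ge0.
have u2 : u ^+ 2 = ell / M%:R by exact: sqr_sqrtr.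
have q1 : ell / M%:R <= 1 by rewrite ler_pdivrMr // mul1r.
have u1 : u <= 1 by nra.
have qm : M%:R^-1 ^+ 2 <= ell / M%:R.
  rewrite expr2 ler_pM2r ?invr_gt0 //.
  have hi : M%:R^-1 <= 4^-1 :> R by rewrite lef_pV2 ?posrE //; lra.
  apply: le_trans _ e1; lra.
have hi0 : 0 < M%:R^-1 :> R by rewrite invr_gt0.
have um : M%:R^-1 <= u by nra.
split => //.
have mm : M%:R * M%:R^-1 = 1 :> R by rewrite mulfV // lt0r_neq0.
nra.
Qed.

Lemma Mu2 : (0 < M)%N -> M%:R * u ^+ 2 = ell.
Proof.
move=> M0; have M0' : (0 : R) < M%:R by rewrite ltr0n.
rewrite /u sqr_sqrtr; first by field; rewrite gt_eqF.
apply: divr_ge0; last exact: ltW.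
rewrite /ell ln_ge0 // (ler_nat R 1 M); exact: M0.
Qed.

Lemma sqrtMell : (0 < M)%N -> Num.sqrt (M%:R * ell) = M%:R * u.
Proof.
move=> M0; have M0' : (0 : R) < M%:R by rewrite ltr0n.
rewrite /u -[M%:R * ell](_ : (M%:R ^+ 2) * (ell / M%:R) = _); last by field; rewrite gt_eqF.
by rewrite sqrtrM ?sqr_ge0 // sqrtr_sqr ger0_norm // ltW.
Qed.

Definition Lg : nat := (M ^ 2)%N.
Definition xv (v : {ffun 'I_(4 * M).+1 -> 'I_Lg}) k : R := (v k)%:R / Lg%:R.

Lemma chern_event a sh tau c lam t : (4 <= M)%N ->
  (forall k, `|a k| <= c) -> 0 <= lam -> lam * c <= 2^-1 ->
  lam * t = 15 / 2 * ell -> 2 * lam ^+ 2 * c ^+ 2 <= u ^+ 2 / 2 ->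
  \sum_(v : {ffun 'I_(4 * M).+1 -> 'I_Lg}) (((t <= G a sh (xv v) tau)%R : bool)%:R : R)
    <= Lg%:R ^+ (4 * M).+1 / M%:R ^+ 5.
Proof.
move=> hM ha l0 lc lt lc2.
have M4 : (4 : R) <= M%:R by rewrite (ler_nat R 4 M).
have M0 : (0 : R) < M%:R by lra.
have L2 : (2 <= Lg)%N by rewrite /Lg; apply: (@leq_trans (4 ^ 2)); rewrite // leq_exp2r.
have H := chernoff_count R 'I_(4 * M).+1 Lg a (fun k => 2 * pi * (nk k * tau) + sh) c lam t L2 ha l0 lc.
rewrite card_ord in H.
apply: (le_trans H).
apply: ler_wpM2l; first by rewrite exprn_ge0.
have Mu := Mu2 (ltnW (ltnW (ltnW hM))).
have [u0 _ _ _ _] := u_facts hM.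
have n5 : (4 * M).+1%:R <= 5 * M%:R :> R.
  by rewrite -natrM ler_nat; lia.
have hX : - (lam * t) + (4 * M).+1%:R * (2 * lam ^+ 2 * c ^+ 2) <= - (5%:R * ell).
  rewrite lt.
  have : (4 * M).+1%:R * (2 * lam ^+ 2 * c ^+ 2) <= 5 * M%:R * (u ^+ 2 / 2).
    apply: ler_pM => //; first by rewrite mulr_ge0 // ?sqr_ge0 // mulr_ge0 // sqr_ge0.
  rewrite -Mu; lra.
apply: (@le_trans _ _ (expR (- (5%:R * ell)))); first by rewrite ler_expR.
by rewrite expRN expRM_natl /ell lnK // posrE.
Qed.

Definition t1 : R := 45 * u.
Definition t2 : R := 720 * (M%:R * u).
Definition Bnd : R := Lg%:R ^+ (4 * M).+1 / M%:R ^+ 5.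

Lemma chernK a sh tau : (4 <= M)%N -> (forall k, `|a k| <= 3 / M%:R) ->
  \sum_(v : {ffun 'I_(4 * M).+1 -> 'I_Lg}) (((t1 <= G a sh (xv v) tau)%R : bool)%:R : R) <= Bnd.
Proof.
move=> hM ha.
have M4 : (4 : R) <= M%:R by rewrite (ler_nat R 4 M).
have M0 : (0 : R) < M%:R by lra.
have Mu := Mu2 (ltnW (ltnW (ltnW hM))).
have [u0 _ u1 _ _] := u_facts hM.
apply: (chern_event a sh tau (3 / M%:R) (M%:R * u / 6) t1) => //.
- by rewrite divr_ge0 // mulr_ge0 // ltW.
- have -> : M%:R * u / 6 * (3 / M%:R) = u / 2 by field; rewrite gt_eqF.
  lra.
- by rewrite /t1 -Mu; field.
- have -> : 2 * (M%:R * u / 6) ^+ 2 * (3 / M%:R) ^+ 2 = u ^+ 2 / 2 by field; rewrite gt_eqF.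
  by [].
Qed.

Lemma chernD a sh tau : (4 <= M)%N -> (forall k, `|a k| <= 48) ->
  \sum_(v : {ffun 'I_(4 * M).+1 -> 'I_Lg}) (((t2 <= G a sh (xv v) tau)%R : bool)%:R : R) <= Bnd.
Proof.
move=> hM ha.
have M4 : (4 : R) <= M%:R by rewrite (ler_nat R 4 M).
have M0 : (0 : R) < M%:R by lra.
have Mu := Mu2 (ltnW (ltnW (ltnW hM))).
have [u0 _ u1 _ _] := u_facts hM.
apply: (chern_event a sh tau 48 (u / 96) t2) => //.
- by rewrite divr_ge0.
- lra.
- by rewrite /t2 -Mu; field.
- have -> : 2 * (u / 96) ^+ 2 * 48 ^+ 2 = u ^+ 2 / 2 :> R by field.
  by [].
Qed.
End Main.

End E.
Import E.

Module F.


Section F.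
Variable R : realType.

Lemma ind_abs (g t : R) :
  ((~~ (`|g| <= t))%R : bool)%:R <= ((t <= g)%R : bool)%:R + ((t <= - g)%R : bool)%:R :> R.
Proof.
case: (boolP (`|g| <= t)) => h /=.
  by rewrite addr_ge0.
have h' : t < `|g| by rewrite ltNge.
case: (boolP (0 <= g)) => g0.
  by rewrite ger0_norm // in h'; rewrite (ltW h') /= lerDl ler0n.
rewrite ler0_norm in h'; last by rewrite ltW // ltNge.
by rewrite (ltW h') /= addrC lerDl ler0n.
Qed.

Lemma ind_and4 (a b c d : bool) :
  ((~~ [&& a, b, c & d]) : bool)%:R <=
  (~~ a)%:R + (~~ b)%:R + (~~ c)%:R + (~~ d)%:R :> R.
Proof. by case: a; case: b; case: c; case: d => /=; lra. Qed.

Lemma ind_forall (I : finType) (P : pred I) :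
  ((~~ [forall j, P j]) : bool)%:R <= \sum_j ((~~ P j) : bool)%:R :> R.
Proof.
case: (boolP [forall j, P j]) => h /=; first by apply: sumr_ge0 => j _; exact: ler0n.
move/forallPn: h => [j hj].
rewrite (bigD1 j) //= hj /= lerDl; apply: sumr_ge0 => i _; exact: ler0n.
Qed.
End F.

Section G.
Variable R : realType.
Variable M : nat.
Local Notation G := (G R M).
Local Notation wK := (wK R M).
Local Notation wD := (wD R M).
Local Notation xv := (xv R M).
Local Notation Lg := (Lg M).

Definition tj (j : 'I_Lg) : R := j%:R / Lg%:R.

Definition goodv (v : {ffun 'I_(4 * M).+1 -> 'I_Lg}) : bool :=
  [forall j : 'I_Lg, [&& `|G wK 0 (xv v) (tj j)| <= t1 R M,
                         `|G wK (-(pi/2)) (xv v) (tj j)| <= t1 R M,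
                         `|G wD (pi/2) (xv v) (tj j)| <= t2 R M &
                         `|G wD 0 (xv v) (tj j)| <= t2 R M]].

Lemma G_opp a sh x tau : G (fun k => - a k) sh x tau = - G a sh x tau.
Proof. by rewrite /E.G -sumrN; apply: eq_bigr => k _; rewrite mulNr. Qed.

Lemma bad_count : (4 <= M)%N ->
  \sum_(v : {ffun 'I_(4 * M).+1 -> 'I_Lg}) ((~~ goodv v) : bool)%:R <= Lg%:R * (8 * Bnd R M).
Proof.
move=> hM.
have M0 : (0 < M)%N by apply: leq_trans hM.
rewrite /goodv.
apply: le_trans; first by apply: ler_sum => v _; exact: ind_forall.
rewrite exchange_big /=.
have -> : Lg%:R * (8 * Bnd R M) = \sum_(j < Lg) (8 * Bnd R M).
  by rewrite sumr_const card_ord mulr_natl.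
apply: ler_sum => j _.
apply: le_trans; first by apply: ler_sum => v _; exact: ind_and4.
apply: le_trans.
  apply: ler_sum => v _.
  apply: lerD; [apply: lerD; [apply: lerD|]|]; exact: ind_abs.
rewrite !big_split /=.
have nK : forall k, `|- wK k| <= 3 / M%:R by move=> k; rewrite normrN; exact: wK_le.
have nD : forall k, `|- wD k| <= 48 by move=> k; rewrite normrN; exact: wD_le.
have k1 := chernK R M wK 0 (tj j) hM (fun k => wK_le R M k M0).
have k2 : \sum_(v : {ffun 'I_(4 * M).+1 -> 'I_Lg}) (((t1 R M <= - G wK (0) (xv v) (tj j))%R : bool)%:R : R) <= Bnd R M.
  under eq_bigr do rewrite -G_opp.
  exact: (chernK R M (fun k => - wK k) (0) (tj j) hM nK).
have k3 := chernK R M wK (-(pi/2)) (tj j) hM (fun k => wK_le R M k M0).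
have k4 : \sum_(v : {ffun 'I_(4 * M).+1 -> 'I_Lg}) (((t1 R M <= - G wK (-(pi/2)) (xv v) (tj j))%R : bool)%:R : R) <= Bnd R M.
  under eq_bigr do rewrite -G_opp.
  exact: (chernK R M (fun k => - wK k) (-(pi/2)) (tj j) hM nK).
have k5 := chernD R M wD (pi/2) (tj j) hM (fun k => wD_le R M k M0).
have k6 : \sum_(v : {ffun 'I_(4 * M).+1 -> 'I_Lg}) (((t2 R M <= - G wD (pi/2) (xv v) (tj j))%R : bool)%:R : R) <= Bnd R M.
  under eq_bigr do rewrite -G_opp.
  exact: (chernD R M (fun k => - wD k) (pi/2) (tj j) hM nD).
have k7 := chernD R M wD 0 (tj j) hM (fun k => wD_le R M k M0).
have k8 : \sum_(v : {ffun 'I_(4 * M).+1 -> 'I_Lg}) (((t2 R M <= - G wD (0) (xv v) (tj j))%R : bool)%:R : R) <= Bnd R M.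
  under eq_bigr do rewrite -G_opp.
  exact: (chernD R M (fun k => - wD k) (0) (tj j) hM nD).
lra.
Qed.
End G.

Section H.
Variable R : realType.
Variable M : nat.
Local Notation Lg := (Lg M).

Lemma prob_bound (hM : (4 <= M)%N) (d : measure_display) (T : measurableType d)
  (P : probability T R) (phi : 'I_(4 * M).+1 -> T -> R) :
  (forall k, uniform01 P (phi k)) -> mutually_independent P phi ->
  ((1 - 8 / Num.sqrt (M%:R ^+ 3 * ln M%:R))%:E <=
    P (\bigcup_(v in [set v | goodv R M v]) Ev R d T _ phi Lg v))%E.
Proof.
move=> hU hI.
have M4 : (4 : R) <= M%:R by rewrite (ler_nat R 4 M).
have M0 : (0 : R) < M%:R by lra.
have L0 : (0 < Lg)%N by rewrite /Lg expn_gt0; apply/orP; left; apply: leq_trans hM.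
rewrite (P_union R d T P _ phi Lg L0 hU hI) lee_fin.
set n := (4 * M).+1.
have LgE : (Lg%:R : R) = M%:R ^+ 2 by rewrite /Lg natrX.
have Lp : (0 : R) < Lg%:R by rewrite ltr0n.
have hsum : \sum_(v : {ffun 'I_n -> 'I_Lg}) ((goodv R M v)%:R : R) =
   Lg%:R ^+ n - \sum_(v : {ffun 'I_n -> 'I_Lg}) ((~~ goodv R M v) : bool)%:R.
  apply/eqP; rewrite eq_sym subr_eq -big_split /=.
  rewrite (eq_bigr (fun _ => 1)); last by move=> v _; case: (goodv R M v); rewrite /= ?addr0 ?add0r.
  rewrite (eq_bigl (fun v => v \in [set: {ffun 'I_n -> 'I_Lg}]%SET)); last by move=> v; rewrite !inE.
  by rewrite sumr_const cardsT card_ffun !card_ord -natrX.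
have hb := bad_count R M hM.
rewrite hsum card_ord mulrBl exprVn mulfV; last by rewrite expf_neq0 // gt_eqF.
set B := \sum_(v : _) _ in hb *.
have hB : B / Lg%:R ^+ n <= 8 / M%:R ^+ 3.
  apply: (le_trans (ler_wpM2r _ hb)); first by rewrite invr_ge0 exprn_ge0 // ltW.
  rewrite le_eqVlt; apply/orP; left; apply/eqP.
  rewrite /Bnd LgE; field.
  by rewrite !expf_neq0 // gt_eqF.
have [e1 e2] := ell_facts R M hM.
have M3 : M%:R <= M%:R ^+ 3 :> R.
  rewrite -[X in X <= _]expr1; apply: ler_eXn2l => //; lra.
have hs0 : 0 < M%:R ^+ 3 * ln M%:R :> R.
  by rewrite mulr_gt0 // ?exprn_gt0 //; rewrite /ell in e1; lra.
have hs : Num.sqrt (M%:R ^+ 3 * ln M%:R) <= M%:R ^+ 3 :> R.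
  rewrite [X in _ <= X](_ : _ = Num.sqrt ((M%:R ^+ 3) ^+ 2)); last first.
    by rewrite sqrtr_sqr ger0_norm // exprn_ge0 // ltW.
  rewrite ler_sqrt ?sqr_ge0 //.
  rewrite expr2 ler_pM2l ?exprn_gt0 //; rewrite /ell in e2; lra.
have hs1 : 0 < Num.sqrt (M%:R ^+ 3 * ln M%:R) :> R by rewrite sqrtr_gt0.
have : 8 / M%:R ^+ 3 <= 8 / Num.sqrt (M%:R ^+ 3 * ln M%:R) :> R.
  by rewrite ler_pM2l // lef_pV2 ?posrE ?exprn_gt0.
lra.
Qed.
End H.

Section I.
Variable R : realType.
Variable M : nat.
Local Notation Lg := (Lg M).
Local Notation G := (G R M).

Lemma sqrt_le_add (x y : R) : Num.sqrt (x ^+ 2 + y ^+ 2) <= `|x| + `|y|.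
Proof.
rewrite -[X in _ <= X]ger0_norm ?addr_ge0 // -sqrtr_sqr ler_sqrt ?sqr_ge0 //.
rewrite -[x ^+ 2]real_normK ?num_real // -[y ^+ 2]real_normK ?num_real //.
have := normr_ge0 x; have := normr_ge0 y; nra.
Qed.

Lemma err_arith (c : R) : (4 <= M)%N -> 0 <= c ->
  (4 * M).+1%:R * (c * (8 * Lg%:R^-1 + 16 * M%:R * Lg%:R^-1)) <= 120 * c.
Proof.
move=> hM c0.
have M4 : (4 : R) <= M%:R by rewrite (ler_nat R 4 M).
have M0 : (0 : R) < M%:R by lra.
have -> : (4 * M).+1%:R * (c * (8 * Lg%:R^-1 + 16 * M%:R * Lg%:R^-1)) =
   c * (64 + 48 / M%:R + 8 / M%:R ^+ 2).
  rewrite /E.Lg natrX -addn1 natrD natrM; field; by rewrite gt_eqF.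
rewrite [120 * c]mulrC; apply: ler_wpM2l => //.
have hi : M%:R^-1 <= 4^-1 :> R by rewrite lef_pV2 ?posrE //; lra.
have hi0 : 0 < M%:R^-1 :> R by rewrite invr_gt0.
rewrite -exprVn; nra.
Qed.

Lemma G_near a sh c t phi v (j : 'I_Lg) tau : (4 <= M)%N ->
  (forall k, `|a k| <= c) -> (forall k, `|phi k - xv R M v k| <= Lg%:R^-1) ->
  `|tau - tj R M j| <= Lg%:R^-1 -> `|G a sh (xv R M v) (tj R M j)| <= t ->
  `|G a sh phi tau| <= t + 120 * c.
Proof.
move=> hM ha hx ht hg.
have c0 : 0 <= c by apply: le_trans (ha ord0).
have := G_lip R M a sh phi (xv R M v) tau (tj R M j) c _ _ ha hx ht.
have := err_arith c hM c0.
have := ler_normD (G a sh phi tau - G a sh (xv R M v) (tj R M j)) (G a sh (xv R M v) (tj R M j)).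
rewrite subrK; lra.
Qed.
End I.

Section J.
Variable R : realType.
Variable M : nat.
Local Notation Lg := (Lg M).

Lemma det_bound (hM : (4 <= M)%N) (phi : 'I_(4 * M).+1 -> R) v :
  goodv R M v -> (forall k, cell R Lg (v k) (phi k)) -> forall tau : R, 0 <= tau < 1 ->
  K_abs M phi tau <= 810 * u R M /\ Kder_abs M phi tau <= 12960 * (M%:R * u R M).
Proof.
move=> hg hc tau /andP [t0 t1'].
have M4 : (4 : R) <= M%:R by rewrite (ler_nat R 4 M).
have M0 : (0 : R) < M%:R by lra.
have M0n : (0 < M)%N by apply: leq_trans hM.
have L0 : (0 < Lg)%N by rewrite /E.Lg expn_gt0 M0n.
have Lp : (0 : R) < Lg%:R by rewrite ltr0n.
have [u0 u2 u1 um Mu1] := u_facts R M hM.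
have hx : forall k, `|phi k - xv R M v k| <= Lg%:R^-1.
  move=> k; have := hc k; rewrite /cell /= in_itv /= => /andP [c1 c2].
  rewrite /xv -addn1 natrD mulrDl mul1r in c2.
  rewrite /xv ger0_norm; [lra | rewrite subr_ge0 //].
set r := tau * Lg%:R.
have r0 : 0 <= r by rewrite mulr_ge0 // ltW.
have /andP [tr1 tr2] := truncn_itv r0.
have jL : (Num.trunc r < Lg)%N.
  rewrite -(ltr_nat R); apply: le_lt_trans tr1 _.
  by rewrite /r -[X in _ < X]mul1r ltr_pM2r.
pose j := Ordinal jL.
have ht : `|tau - tj R M j| <= Lg%:R^-1.
  rewrite /tj /=.
  have a1 : (Num.trunc r)%:R / Lg%:R <= tau by rewrite ler_pdivrMr.
  have a2 : tau < (Num.trunc r).+1%:R / Lg%:R by rewrite ltr_pdivlMr.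
  rewrite -addn1 natrD mulrDl mul1r in a2.
  rewrite ger0_norm; [lra | rewrite subr_ge0 //].
move/forallP: hg => /(_ j) /and4P [g1 g2 g3 g4].
have b1 := G_near R M _ _ _ _ phi v j tau hM (fun k => wK_le R M k M0n) hx ht g1.
have b2 := G_near R M _ _ _ _ phi v j tau hM (fun k => wK_le R M k M0n) hx ht g2.
have b3 := G_near R M _ _ _ _ phi v j tau hM (fun k => wD_le R M k M0n) hx ht g3.
have b4 := G_near R M _ _ _ _ phi v j tau hM (fun k => wD_le R M k M0n) hx ht g4.
rewrite /t1 /t2 in b1 b2 b3 b4.
split.
  rewrite /K_abs K_reE K_imE; apply: le_trans (sqrt_le_add R _ _) _; lra.
rewrite /Kder_abs dK_reE dK_imE; apply: le_trans (sqrt_le_add R _ _) _; lra.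
Qed.
End J.

End F.
Import F.

Theorem lemma9 (R : realType) :
  exists C1 C2 C3 : R,
  forall (M : nat), (4 <= M)%N ->
  forall (d : measure_display) (T : measurableType d) (P : probability T R)
         (phi : 'I_(4 * M).+1 -> T -> R),
    (forall k, uniform01 P (phi k)) ->
    mutually_independent P phi ->
    exists A : set T, measurable A /\
      (A `<=` [set w | forall tau : R, 0 <= tau < 1 ->
          K_abs M (fun k => phi k w) tau <= C1 * Num.sqrt (ln M%:R / M%:R) /\
          Kder_abs M (fun k => phi k w) tau <= C2 * Num.sqrt (M%:R * ln M%:R)]) /\
      ((1 - C3 / Num.sqrt (M%:R ^+ 3 * ln M%:R))%:E <= P A)%E.
Proof.
exists 810, 12960, 8 => M hM d T P phi hU hI.
exists (\bigcup_(v in [set v | goodv R M v]) Ev R d T _ phi (Lg M) v).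
split.
  apply: fin_bigcup_measurable; first exact: finite_finset.
  by move=> v _; exact: (Ev_meas R d T P _ phi (Lg M) hU).
split; last exact: prob_bound.
move=> w [v gv Ew] tau htau.
have hc : forall k, cell R (Lg M) (v k) (phi k w).
  by move=> k; apply: Ew; rewrite /= inE.
have [h1 h2] := det_bound R M hM (fun k => phi k w) v gv hc tau htau.
split; first exact: h1.
have M0 : (0 < M)%N by apply: leq_trans hM.
by rewrite (sqrtMell R M M0).
Qed.
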